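(* Let $F\leq F'\leq\hat F$ be permutation groups on $\Omega$. The following are equivalent: (i) $G(F,F')^+$ has index two in $G(F,F')$, i.e. $G(F,F')^+=G(F,F')^\star$; (ii) $G(F,F')^+$ has finite index in $G(F,F')$; (iii) $F$ is transitive on $\Omega$ and $F'$ is generated by its point stabilizers.
   Context: Standing notation. $\Omega$ is a finite set with $d=|\Omega|\geq 3$, $\mathcal{T}_d$ is the $d$-regular tree with vertex set $V$ and set $E$ of non-oriented edges. Fix a coloring $c:E\to\Omega$ such that for every vertex $v$ its restriction $c_v$ to the set $E(v)$ of edges containing $v$ is a bijection onto $\Omega$. For $g\in\mathrm{Aut}(\mathcal{T}_d)$ and $v\in V$, the local permutation is $\sigma(g,v)=c_{gv}\circ g_v\circ c_v^{-1}\in\mathrm{Sym}(\Omega)$, where $g_v:E(v)\to E(gv)$ is induced by $g$. For $F\leq\mathrm{Sym}(\Omega)$: $U(F)=\{g:\sigma(g,v)\in F \ \forall v\}$; $G(F)=\{g:\sigma(g,v)\in F \text{ for all but finitely many } v\}$; $\hat F$ is the subgroup of permutations preserving each $F$-orbit. For $F\leq F'\leq\hat F$, $G(F,F')=G(F)\cap U(F')$. For a group $G$ acting on a tree, $G^\star$ is the subgroup preserving the natural bipartition of the vertex set (vertices at even distance in the same class), and $G^+$ is the subgroup generated by the pointwise stabilizers $G_e$ of all edges $e$. *)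

(* Defs.v *)
From HB Require Import structures.
From mathcomp Require Import all_boot all_order all_fingroup.
Set Implicit Arguments. Unset Strict Implicit. Unset Printing Implicit Defensive.

(* Concrete model of the d-regular tree T_d with a legal coloring by Omega:
   a vertex is a reduced word over Omega (no two consecutive letters equal),
   written with the most recent letter first.  The neighbour of v across the
   edge of colour w is [step v w]: it deletes the head letter if it is w,
   otherwise it prepends w.  Thus the edge {v, step v w} has colour w, and
   every vertex has exactly one incident edge of each colour. *)

Section Tree.
Variable Omega : finType.

Definition reduced (s : seq Omega) : bool := sorted (fun a b => a != b) s.

Definition step_seq (s : seq Omega) (w : Omega) : seq Omega :=
  if s is a :: t then (if a == w then t else w :: s) else [:: w].

Lemma step_reduced (s : seq Omega) (w : Omega) :
  reduced s -> reduced (step_seq s w).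
Proof.
case: s => [|a t] //= H.
case: eqP => [_|/eqP naw]; first by case: t H => //= b t /andP[].
by rewrite /reduced /= eq_sym naw.
Qed.

Definition vertex := {s : seq Omega | reduced s}.

Definition step (v : vertex) (w : Omega) : vertex :=
  exist _ (step_seq (sval v) w) (step_reduced w (proj2_sig v)).

Definition adj (u v : vertex) : Prop := exists w, v = step u w.

Definition is_aut (g : vertex -> vertex) : Prop :=
  bijective g /\ forall u v, adj u v <-> adj (g u) (g v).

(* sigma(g,v) \in F : the local permutation at v lies in F
   (sigma(g,v) maps the colour w of the edge {v, step v w} to the colour of
   its image {g v, g (step v w)}). *)
Definition loc_in (F : {set {perm Omega}}) (g : vertex -> vertex) (v : vertex)
  : Prop :=
  exists2 p, p \in F & forall w, g (step v w) = step (g v) (p w).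

Definition U_ (F : {set {perm Omega}}) (g : vertex -> vertex) : Prop :=
  is_aut g /\ forall v, loc_in F g v.

Definition G_ (F : {set {perm Omega}}) (g : vertex -> vertex) : Prop :=
  is_aut g /\ exists l : seq vertex, forall v, v \notin l -> loc_in F g v.

Definition GFF (F F' : {set {perm Omega}}) (g : vertex -> vertex) : Prop :=
  G_ F g /\ U_ F' g.

Definition hatF (F : {group {perm Omega}}) : {set {perm Omega}} :=
  [set p : {perm Omega} | [forall x, p x \in orbit 'P F x]].

Inductive gen (S : (vertex -> vertex) -> Prop) : (vertex -> vertex) -> Prop :=
| gen_id : gen S id
| gen_mul g h : S g -> gen S h -> gen S (g \o h)
| gen_invmul g g' h : S g -> cancel g g' -> cancel g' g -> gen S h ->
    gen S (g' \o h).

Definition edge_stab (G : (vertex -> vertex) -> Prop) (v : vertex) (w : Omega)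
  (g : vertex -> vertex) : Prop :=
  G g /\ g v = v /\ g (step v w) = step v w.

Definition plus (G : (vertex -> vertex) -> Prop) : (vertex -> vertex) -> Prop :=
  gen (fun g => exists v w, edge_stab G v w g).

Definition in_lcoset (H : (vertex -> vertex) -> Prop) (a g : vertex -> vertex)
  : Prop :=
  exists2 h, H h & forall v, g v = a (h v).

Definition has_index (G H : (vertex -> vertex) -> Prop) (n : nat) : Prop :=
  exists r : 'I_n -> (vertex -> vertex),
    (forall i, G (r i)) /\
    (forall g, G g -> exists i, in_lcoset H (r i) g) /\
    (forall i j, in_lcoset H (r i) (r j) -> i = j).

End Tree.

(* Main.v *)
Require Import Defs.
From HB Require Import structures.
From mathcomp Require Import all_boot all_order all_fingroup.
From Stdlib Require Import FunctionalExtensionality ClassicalEpsilon Lia.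
From mathcomp Require Import zify.
Set Implicit Arguments. Unset Strict Implicit. Unset Printing Implicit Defensive.

Section Gen.
Variable T : finType.
Implicit Types (s t x y : seq T) (a b w : T).

Lemma reduced_cons a s : reduced (a :: s) -> reduced s.
Proof. by case: s => //= b s /andP[]. Qed.

Lemma reduced_cons2 a b s : reduced (a :: b :: s) = (a != b) && reduced (b :: s).
Proof. by []. Qed.

Lemma step_step s w : reduced s -> step_seq (step_seq s w) w = s.
Proof.
case: s => [|a t] /=; first by rewrite eqxx.
case: eqP => [<-|/eqP naw] H; last by rewrite /= eqxx.
case: t H => [|b t] //= /andP[ab _].
by rewrite eq_sym (negbTE ab).
Qed.

Lemma step_cons s a : reduced (a :: s) -> step_seq s a = a :: s.
Proof. by case: s => [|b t] //= /andP[ab _]; rewrite eq_sym (negbTE ab). Qed.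

Lemma step_inj s : injective (step_seq s).
Proof.
case: s => [|a t] w w' /=; first by case.
case: (a =P w) => [aw|naw]; case: (a =P w') => [aw'|naw'].
- by rewrite -aw -aw'.
- by move=> E; have := congr1 size E => /= /eqP; lia.
- by move=> E; have := congr1 size E => /= /eqP; lia.
- by case.
Qed.

Lemma step_injl s s' c : reduced s -> reduced s' -> step_seq s c = step_seq s' c -> s = s'.
Proof. by move=> Hs Hs' E; rewrite -(step_step c Hs) E step_step. Qed.

Lemma odd_step s w : odd (size (step_seq s w)) = ~~ odd (size s).
Proof. by case: s => [|a t] //=; case: eqP => //= _; rewrite negbK. Qed.

Definition actS x s := foldr (fun a acc => step_seq acc a) x s.

Lemma actS_reduced x s : reduced x -> reduced (actS x s).
Proof. by move=> Hx; elim: s => //= a s IH; apply: step_reduced. Qed.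

Lemma actS_step x s w : reduced x -> reduced s ->
  actS x (step_seq s w) = step_seq (actS x s) w.
Proof.
move=> Hx; case: s => [|a t] //= Hs.
case: eqP => [->|_] //=.
by rewrite step_step // actS_reduced.
Qed.

Lemma actS_comp y x v : reduced y -> reduced x ->
  actS y (actS x v) = actS (actS y x) v.
Proof.
move=> Hy Hx; elim: v => //= a v IH.
by rewrite actS_step ?actS_reduced // IH.
Qed.

Lemma actS_nil v : reduced v -> actS [::] v = v.
Proof.
elim: v => //= a v IH Hv.
by rewrite IH ?(reduced_cons Hv) // step_cons.
Qed.

Lemma actS_inv x : reduced x -> exists x', reduced x' /\ actS x' x = [::] /\ actS x x' = [::].
Proof.
elim: x => [|a t IH] Hx; first by exists [::].
have Ht := reduced_cons Hx.
have [t' [Ht' [E1 E2]]] := IH Ht.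
exists (actS [:: a] t'); split; first exact: actS_reduced.
split.
  by rewrite /= -actS_comp // E1 /= eqxx.
by rewrite actS_comp //= eqxx E2.
Qed.

Lemma actS_inj x y s : reduced x -> reduced y -> actS x s = actS y s -> x = y.
Proof.
move=> Hx Hy; elim: s => //= a s IH E.
by apply: IH; apply: (step_injl (c := a)); rewrite ?actS_reduced.
Qed.

End Gen.

Local Open Scope group_scope.
Section Tree2.
Variable Omega : finType.
Local Notation vertex := (vertex Omega).
Local Notation step := (@step Omega).
Implicit Types (g h : vertex -> vertex) (v u x : vertex) (w a b : Omega).

Definition vroot : vertex := exist _ [::] isT.

Lemma vstep_step v w : step (step v w) w = v.
Proof. apply: val_inj; exact: step_step (proj2_sig v). Qed.

Lemma vstep_inj v : injective (step v).
Proof. by move=> w w' /(congr1 val) /= /step_inj. Qed.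

Lemma vertex_ind (P : vertex -> Prop) :
  P vroot -> (forall v a, P v -> P (step v a)) -> forall v, P v.
Proof.
move=> P0 PS [s Hs]; elim: s Hs => [|a t IH] Hs.
  by have -> : exist _ [::] Hs = vroot by apply: val_inj.
have Ht := reduced_cons Hs.
have -> : exist _ (a :: t) Hs = step (exist _ t Ht) a.
  by apply: val_inj; rewrite /= step_cons.
exact/PS/IH.
Qed.

Lemma odd_vstep v w : odd (size (sval (step v w))) = ~~ odd (size (sval v)).
Proof. exact: odd_step. Qed.

Lemma aut_of_loc g : bijective g ->
  (forall v, exists p : {perm Omega}, forall w, g (step v w) = step (g v) (p w)) ->
  is_aut g.
Proof.
move=> bg Hl; split=> // u v; split=> [[w ->]|[w E]].
  by have [p Hp] := Hl u; exists (p w).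
have [p Hp] := Hl u.
by exists (p^-1 w); apply: (bij_inj bg); rewrite Hp permKV.
Qed.

Lemma aut_comp g h : is_aut g -> is_aut h -> is_aut (g \o h).
Proof.
move=> [bg Hg] [bh Hh]; split; first exact: bij_comp.
move=> u v; split => H.
  by apply/(Hg (h u) (h v))/(Hh u v).
by apply/(Hh u v)/(Hg (h u) (h v)).
Qed.

Lemma aut_inv g g' : is_aut g -> cancel g g' -> cancel g' g -> is_aut g'.
Proof.
move=> [bg Hg] K1 K2; split; first exact: (Bijective K2 K1).
move=> u v; split => H.
  by apply/(Hg (g' u) (g' v)); rewrite !K2.
by have := (Hg (g' u) (g' v)).1 H; rewrite !K2.
Qed.

Lemma aut_adj g v w : is_aut g -> exists w', g (step v w) = step (g v) w'.
Proof. by move=> [_ Hg]; case: ((Hg v (step v w)).1 (ex_intro _ w erefl)) => w' E; exists w'. Qed.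

Lemma loc_in_sub (X Y : {set {perm Omega}}) g v :
  X \subset Y -> loc_in X g v -> loc_in Y g v.
Proof. by move=> /subsetP sXY [p Hp E]; exists p => //; apply: sXY. Qed.

Lemma loc_in_comp (X : {set {perm Omega}}) g h v :
  (forall p q, p \in X -> q \in X -> p * q \in X) ->
  loc_in X h v -> loc_in X g (h v) -> loc_in X (g \o h) v.
Proof.
move=> HX [p Hp Ep] [q Hq Eq]; exists (p * q); first exact: HX.
by move=> w; rewrite /= Ep Eq permM.
Qed.

Lemma loc_in_inv (X : {set {perm Omega}}) g g' v :
  (forall p, p \in X -> p^-1 \in X) -> cancel g g' -> cancel g' g ->
  loc_in X g (g' v) -> loc_in X g' v.
Proof.
move=> HX K1 K2 [p Hp E]; exists p^-1; first exact: HX.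
by move=> w; apply: (can_inj K1); rewrite K2 E K2 permKV.
Qed.

Lemma loc_perm (X : {set {perm Omega}}) g v (p : {perm Omega}) w :
  (forall w, g (step v w) = step (g v) (p w)) -> g (step v w) = step (g v) (p w).
Proof. by []. Qed.

Section GFFclos.
Variables F F' : {group {perm Omega}}.

Lemma GFF_comp g h : GFF F F' g -> GFF F F' h -> GFF F F' (g \o h).
Proof.
move=> [[ag [lg Hlg]] [_ Ug]] [[ah [lh Hlh]] [_ Uh]].
have [h' K1 K2] := ah.1.
have ac := aut_comp ag ah.
split; split => //.
  exists (lh ++ map h' lg) => v; rewrite mem_cat negb_or => /andP[vh vg].
  apply: loc_in_comp; first by move=> p q; apply: groupM.
    exact: Hlh.
  apply: Hlg; apply: contra vg => hv.
  by rewrite -{1}(K1 v); apply: map_f.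
move=> v; apply: loc_in_comp; first by move=> p q; apply: groupM.
  exact: Uh.
exact: Ug.
Qed.

Lemma GFF_inv g g' : GFF F F' g -> cancel g g' -> cancel g' g -> GFF F F' g'.
Proof.
move=> [[ag [lg Hlg]] [_ Ug]] K1 K2.
have ai := aut_inv ag K1 K2.
split; split => //.
  exists (map g lg) => v vg.
  apply: (loc_in_inv (g := g)) => //; first by move=> p; rewrite groupV.
  apply: Hlg; apply: contra vg => hv.
  by rewrite -(K2 v); apply: map_f.
move=> v; apply: (loc_in_inv (g := g)) => //; first by move=> p; rewrite groupV.
Qed.

End GFFclos.

Definition Tr x v : vertex :=
  exist _ (actS (sval x) (sval v)) (actS_reduced (sval v) (proj2_sig x)).

Lemma Tr_step x v w : Tr x (step v w) = step (Tr x v) w.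
Proof. by apply: val_inj; rewrite /= actS_step //; case: x; case: v. Qed.

Lemma Tr_comp x y v : Tr y (Tr x v) = Tr (Tr y x) v.
Proof. by apply: val_inj; rewrite /= actS_comp //; case: x; case: y. Qed.

Lemma Tr_root v : Tr vroot v = v.
Proof. by apply: val_inj; rewrite /= actS_nil //; case: v. Qed.

Lemma Tr_at_root x : Tr x vroot = x.
Proof. by apply: val_inj. Qed.

Lemma Tr_inv x : exists x', cancel (Tr x) (Tr x') /\ cancel (Tr x') (Tr x).
Proof.
case: x => s Hs.
have [s' [Hs' [E1 E2]]] := actS_inv Hs.
exists (exist _ s' Hs'); split => v; rewrite Tr_comp.
  have -> : Tr (exist _ s' Hs') (exist _ s Hs) = vroot by apply: val_inj; rewrite /= E1.
  exact: Tr_root.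
have -> : Tr (exist _ s Hs) (exist _ s' Hs') = vroot by apply: val_inj; rewrite /= E2.
exact: Tr_root.
Qed.

Lemma Tr_loc (X : {set {perm Omega}}) x v : 1 \in X -> loc_in X (Tr x) v.
Proof. by move=> HX; exists 1 => // w; rewrite perm1 Tr_step. Qed.

Lemma Tr_bij x : bijective (Tr x).
Proof. by have [x' [K1 K2]] := Tr_inv x; exists (Tr x'). Qed.

Lemma Tr_aut x : is_aut (Tr x).
Proof.
apply: aut_of_loc; first exact: Tr_bij.
by move=> v; exists 1 => w; rewrite perm1 Tr_step.
Qed.

Lemma Tr_GFF (F F' : {group {perm Omega}}) x : GFF F F' (Tr x).
Proof.
split; split; try exact: Tr_aut.
  by exists [::] => v _; apply: Tr_loc.
by move=> v; apply: Tr_loc.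
Qed.

End Tree2.

Section Tree3.
Variable Omega : finType.
Local Notation vertex := (vertex Omega).
Local Notation step := (@step Omega).
Local Notation vroot := (vroot Omega).
Implicit Types (g h f : vertex -> vertex) (v u x : vertex) (w a b : Omega).

Definition vodd v := odd (size (sval v)).

Lemma aut_parity g : is_aut g -> forall v, vodd (g v) = vodd v (+) vodd (g vroot).
Proof.
move=> ag; apply: vertex_ind => [|v a IH]; first by [].
have [w' ->] := aut_adj v a ag.
move: IH; rewrite /vodd !odd_vstep => ->; by rewrite addNb.
Qed.

Lemma fix_parity g v0 : is_aut g -> g v0 = v0 -> vodd (g vroot) = false.
Proof.
move=> ag E; have := aut_parity ag v0; rewrite E.
by case: (vodd (g vroot)); case: (vodd v0).
Qed.

Lemma gen_comp (S : (vertex -> vertex) -> Prop) g h :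
  gen S g -> gen S h -> gen S (g \o h).
Proof.
elim => [|g1 h1 Sg1 _ IH|g1 g1' h1 Sg1 K1 K2 _ IH] Hh.
- exact: Hh.
- exact: (gen_mul Sg1 (IH Hh)).
- exact: (gen_invmul Sg1 K1 K2 (IH Hh)).
Qed.

Lemma gen_parity (S : (vertex -> vertex) -> Prop) f :
  (forall g, S g -> is_aut g /\ exists v0, g v0 = v0) -> gen S f -> vodd (f vroot) = false.
Proof.
move=> HS; elim => [|g h Sg _ IH|g g' h Sg K1 K2 _ IH]; first by [].
- have [ag [v0 E]] := HS g Sg.
  by rewrite /= (aut_parity ag) IH (fix_parity ag E).
- have [ag [v0 E]] := HS g Sg.
  have ag' := aut_inv ag K1 K2.
  have E' : vodd (g' vroot) = false.
    have := aut_parity ag (g' vroot); rewrite K2 (fix_parity ag E) addbF.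
    by move=> <-.
  by rewrite /= (aut_parity ag') IH E'.
Qed.

Section Conj.
Variables F F' : {group {perm Omega}}.

Lemma plus_conj T T' f : GFF F F' T -> cancel T T' -> cancel T' T ->
  plus (GFF F F') f -> plus (GFF F F') (T \o f \o T').
Proof.
move=> GT K1 K2.
have GT' := GFF_inv GT K1 K2.
have [_ [_ UT]] := GT.
have Sconj : forall g, (exists v w, edge_stab (GFF F F') v w g) ->
    exists v w, edge_stab (GFF F F') v w (T \o g \o T').
  move=> g [v [w [Gg [gv gw]]]].
  have [p _ Ep] := UT v.
  exists (T v), (p w); split; first by apply: GFF_comp => //; apply: GFF_comp.
  split; first by rewrite /= K1 gv.
  by rewrite -Ep /= K1 gw.
elim => [|g h Sg _ IH|g g' h Sg K3 K4 _ IH].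
- have -> : T \o id \o T' = id by apply: functional_extensionality => x; exact: K2.
  exact: gen_id.
- have -> : T \o (g \o h) \o T' = (T \o g \o T') \o (T \o h \o T').
    by apply: functional_extensionality => x; rewrite /= K1.
  exact: (gen_mul (Sconj _ Sg) IH).
- have -> : T \o (g' \o h) \o T' = (T \o g' \o T') \o (T \o h \o T').
    by apply: functional_extensionality => x; rewrite /= K1.
  apply: (gen_invmul (g := T \o g \o T') (Sconj _ Sg)) => // x; by rewrite /= ?K1 ?K3 ?K4 K2.
Qed.

End Conj.
End Tree3.

Section Construct.
Variable Omega : finType.
Local Notation vertex := (vertex Omega).
Local Notation step := (@step Omega).
Local Notation vroot := (vroot Omega).
Variables F F' : {group {perm Omega}}.
Hypothesis sFF' : F \subset F'.
Hypothesis sF'h : F' \subset hatF F.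
Variable p : {perm Omega}.
Hypothesis pF' : p \in F'.

Definition pk (a : Omega) (q : {perm Omega}) : {perm Omega} :=
  odflt q [pick f in F | f a == q a].

Lemma pkP a q : q \in hatF F -> pk a q \in F /\ pk a q a = q a.
Proof.
rewrite inE => /forallP /(_ a) /orbitP [f fF E].
rewrite /pk; case: pickP => [f' /andP[f'F /eqP ->]|/(_ f)] //=.
by rewrite fF -E eqxx.
Qed.

Fixpoint Sx (t : seq Omega) : {perm Omega} :=
  if t is a :: t' then pk a (Sx t') else p.
Arguments Sx : simpl never.

Lemma Sx_cons a t : Sx (a :: t) = pk a (Sx t). Proof. by []. Qed.

Lemma Sx_F' t : Sx t \in F'.
Proof.
elim: t => [|a t IH] //; rewrite Sx_cons.
have [H _] := pkP a (subsetP sF'h _ IH); exact: (subsetP sFF').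
Qed.

Lemma Sx_F a t : Sx (a :: t) \in F.
Proof. by rewrite Sx_cons; have [H _] := pkP a (subsetP sF'h _ (Sx_F' t)). Qed.

Lemma Sx_head a t : Sx (a :: t) a = Sx t a.
Proof. by rewrite Sx_cons; have [_ H] := pkP a (subsetP sF'h _ (Sx_F' t)). Qed.

Fixpoint Gm (t : seq Omega) : seq Omega :=
  if t is a :: t' then Sx t' a :: Gm t' else [::].
Fixpoint Hm (u : seq Omega) : seq Omega :=
  if u is b :: u' then (Sx (Hm u'))^-1 b :: Hm u' else [::].

Lemma Gm_reduced t : reduced t -> reduced (Gm t).
Proof.
elim: t => [|a t IH] //; case: t IH => [|b t] IH // H.
rewrite reduced_cons2 in H; case/andP: H => ab H.
have IH' := IH H.
rewrite [Gm _]/= reduced_cons2 IH' andbT.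
rewrite -(Sx_head b t) (inj_eq (@perm_inj _ _)) //.
Qed.

Lemma Hm_reduced u : reduced u -> reduced (Hm u).
Proof.
elim: u => [|b u IH] //; case: u IH => [|c u] IH // H.
rewrite reduced_cons2 in H; case/andP: H => bc H.
have IH' := IH H.
rewrite [Hm (b :: _)]/= reduced_cons2 IH' andbT.
set a' := (Sx (Hm u))^-1 c.
apply/eqP => E; move: bc.
rewrite -(permKV (Sx (a' :: Hm u)) b) E Sx_head /a' permKV eqxx.
by [].
Qed.

Lemma Gm_Hm u : Gm (Hm u) = u.
Proof. by elim: u => //= b u ->; rewrite permKV. Qed.

Lemma Hm_Gm t : Hm (Gm t) = t.
Proof. by elim: t => //= a t ->; rewrite permK. Qed.

Lemma Gm_step t w : reduced t -> Gm (step_seq t w) = step_seq (Gm t) (Sx t w).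
Proof.
case: t => [|a t] // H.
rewrite [step_seq (a :: t) w]/=.
case: (a =P w) => [<-|/eqP naw].
  by rewrite [Gm (a :: t)]/= Sx_head /= eqxx.
rewrite [Gm (w :: _)]/= [Gm (a :: t)]/= [step_seq (_ :: _) _]/=.
by rewrite -(Sx_head a t) (inj_eq (@perm_inj _ _)) (negbTE naw).
Qed.

Definition g0 (v : vertex) : vertex :=
  exist _ (Gm (sval v)) (Gm_reduced (proj2_sig v)).
Definition g0' (v : vertex) : vertex :=
  exist _ (Hm (sval v)) (Hm_reduced (proj2_sig v)).

Lemma g0K : cancel g0 g0'.
Proof. by move=> v; apply: val_inj; rewrite /= Hm_Gm. Qed.
Lemma g0K' : cancel g0' g0.
Proof. by move=> v; apply: val_inj; rewrite /= Gm_Hm. Qed.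

Lemma g0_step v w : g0 (step v w) = step (g0 v) (Sx (sval v) w).
Proof. by apply: val_inj; rewrite /= Gm_step //; case: v. Qed.

Lemma g0_root : g0 vroot = vroot.
Proof. by apply: val_inj. Qed.

Lemma g0_root_step w : g0 (step vroot w) = step vroot (p w).
Proof. by rewrite g0_step g0_root. Qed.

Lemma g0_GFF : GFF F F' g0.
Proof.
have ag : is_aut g0.
  apply: aut_of_loc; first exact: (Bijective g0K g0K').
  by move=> v; exists (Sx (sval v)) => w; rewrite g0_step.
split; split => //.
  exists [:: vroot] => v; rewrite inE => nv.
  exists (Sx (sval v)); last by move=> w; rewrite g0_step.
  case: v nv => [[|a t] Ht] nv; last exact: Sx_F.
  by move: nv; have -> : exist _ [::] Ht = vroot by apply: val_inj.
by move=> v; exists (Sx (sval v)); [exact: Sx_F' | move=> w; rewrite g0_step].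
Qed.

Lemma g0'_GFF : GFF F F' g0'.
Proof. exact: (GFF_inv g0_GFF g0K g0K'). Qed.

Lemma g0'_root : g0' vroot = vroot.
Proof. by apply: val_inj. Qed.

End Construct.

Section LamSec.
Variable Omega : finType.
Local Notation vertex := (vertex Omega).
Local Notation step := (@step Omega).
Local Notation vroot := (vroot Omega).
Variable K : {group {perm Omega}}.
Implicit Types (g h f : vertex -> vertex) (v u x : vertex) (w a b : Omega).

Definition cls (a : Omega) : {set Omega} := orbit 'P K a.
Definition Ac (y : seq {set Omega}) (s : seq Omega) :=
  foldr (fun a acc => step_seq acc (cls a)) y s.
Definition Lam s := Ac [::] s.

Lemma Ac_actS y s : Ac y s = actS y (map cls s).
Proof. by elim: s => //= a s ->. Qed.

Lemma Ac_reduced y s : reduced y -> reduced (Ac y s).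
Proof. by move=> Hy; rewrite Ac_actS; apply: actS_reduced. Qed.

Lemma Lam_reduced s : reduced (Lam s).
Proof. exact: Ac_reduced. Qed.

Lemma Ac_step y s w : reduced y -> reduced s ->
  Ac y (step_seq s w) = step_seq (Ac y s) (cls w).
Proof.
move=> Hy; case: s => [|a t] //= Hs.
case: eqP => [->|_] //=.
by rewrite step_step // Ac_reduced.
Qed.

Lemma Ac_nil y s : reduced y -> Lam s = [::] -> Ac y s = y.
Proof.
move=> Hy; rewrite /Lam !Ac_actS => E.
by rewrite -[actS y _](actS_comp _ Hy (isT : reduced [::])) E.
Qed.

Definition lp g := forall v, loc_in (hatF K) g v.

Lemma hatF1 : 1 \in hatF K.
Proof. by rewrite inE; apply/forallP => x; rewrite perm1 orbit_refl. Qed.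

Lemma hatF_M q r : q \in hatF K -> r \in hatF K -> q * r \in hatF K.
Proof.
rewrite !inE => /forallP Hq /forallP Hr; apply/forallP => x.
rewrite permM; exact: orbit_trans (Hr _) (Hq _).
Qed.

Lemma hatF_V q : q \in hatF K -> q^-1 \in hatF K.
Proof.
rewrite !inE => /forallP Hq; apply/forallP => x.
by have := Hq (q^-1 x); rewrite permKV orbit_sym.
Qed.

Lemma cls_hat q a : q \in hatF K -> cls (q a) = cls a.
Proof. by rewrite inE => /forallP /(_ a) /orbit_eqP. Qed.

Lemma sub_hatF : K \subset hatF K.
Proof.
apply/subsetP => q qK; rewrite inE; apply/forallP => x.
exact: (mem_orbit 'P x qK).
Qed.

Lemma Lam_formula g : lp g -> forall v, Lam (sval (g v)) = Ac (Lam (sval (g vroot))) (sval v).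
Proof.
move=> lg; apply: vertex_ind => [|v a IH]; first by [].
have [q qh Eq] := lg v.
rewrite Eq /= /Lam Ac_step //; last exact: (proj2_sig (g v)).
rewrite -/(Lam _) IH (cls_hat a qh) Ac_step //; last exact: (proj2_sig v).
exact: Lam_reduced.
Qed.

Definition Inv g := is_aut g /\ lp g /\ Lam (sval (g vroot)) = [::].

Lemma Inv_fix g v0 : is_aut g -> lp g -> g v0 = v0 -> Inv g.
Proof.
move=> ag lg E; split => //; split => //.
have := Lam_formula lg v0; rewrite E /Lam !Ac_actS.
move=> Eq; symmetry; apply: (actS_inj _ _ Eq) => //; exact: actS_reduced.
Qed.

Lemma Inv_comp g h : Inv g -> Inv h -> Inv (g \o h).
Proof.
move=> [ag [lg Lg]] [ah [lh Lh]]; split; first exact: aut_comp.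
split.
  by move=> v; apply: loc_in_comp; [exact: hatF_M | exact: lh | exact: lg].
by rewrite /= (Lam_formula lg) Lg.
Qed.

Lemma Inv_inv g g' : Inv g -> cancel g g' -> cancel g' g -> Inv g'.
Proof.
move=> [ag [lg Lg]] K1 K2; split; first exact: aut_inv ag K1 K2.
split.
  by move=> v; apply: (loc_in_inv (g := g)) => //; exact: hatF_V.
have := Lam_formula lg (g' vroot); rewrite K2 Lg.
by move=> E; rewrite /Lam -E.
Qed.

Lemma gen_Inv (S : (vertex -> vertex) -> Prop) f :
  (forall g, S g -> Inv g) -> gen S f -> Inv f.
Proof.
move=> HS; elim => [|g h Sg _ IH|g g' h Sg K1 K2 _ IH].
- split; first by split; [exists id | by []].
  by split => // v; exists 1; [exact: hatF1 | move=> w; rewrite perm1].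
- exact: Inv_comp (HS _ Sg) IH.
- exact: Inv_comp (Inv_inv (HS _ Sg) K1 K2) IH.
Qed.

Section Alt.
Variables a b : Omega.
Hypothesis ab : cls a != cls b.

Definition altc i := if odd i then a else b.
Fixpoint alt i := if i is i'.+1 then altc i' :: alt i' else [::].

Lemma altc_neq i : cls (altc i.+1) != cls (altc i).
Proof. by rewrite /altc /=; case: (odd i) => //=; rewrite eq_sym. Qed.

Lemma alt_map_reduced i : reduced (map cls (alt i)).
Proof.
elim: i => [|i IH] //; case: i IH => [|i] IH //.
by rewrite [alt _]/= [map _ _]/= reduced_cons2 altc_neq.
Qed.

Lemma alt_reduced i : reduced (alt i).
Proof.
elim: i => [|i IH] //; case: i IH => [|i] IH //.
rewrite [alt _]/= reduced_cons2 IH andbT.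
by apply: contraNneq (altc_neq i) => ->.
Qed.

Lemma Lam_alt i : Lam (alt i) = map cls (alt i).
Proof.
elim: i => [|i IH] //.
rewrite [alt _]/= /Lam [Ac _ _]/= -/(Lam _) IH step_cons //.
exact: (alt_map_reduced i.+1).
Qed.

Lemma size_Lam_alt i : size (Lam (alt i)) = i.
Proof. by rewrite Lam_alt size_map; elim: i => //= i ->. Qed.

Definition avert i : vertex := exist _ (alt i) (alt_reduced i).

Lemma no_fin_index (G S : (vertex -> vertex) -> Prop) n :
  (forall x, G (Tr x)) ->
  (forall g, S g -> is_aut g /\ lp g /\ exists v0, g v0 = v0) ->
  ~ has_index G (gen S) n.
Proof.
move=> GT HS [r [rG [cov dis]]].
have HS' : forall g, S g -> Inv g.
  by move=> g /HS [ag [lg [v0 E]]]; apply: Inv_fix E.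
have sel : forall i : 'I_n.+1, {k : 'I_n | in_lcoset (gen S) (r k) (Tr (avert i))}.
  by move=> i; apply: constructive_indefinite_description; exact: cov (GT _).
pose f i := proj1_sig (sel i).
have key : forall i : 'I_n.+1, Lam (alt i) = Lam (sval (r (f i) vroot)).
  move=> i; have [h Hh E] := proj2_sig (sel i).
  have [ah [lh Lh]] := gen_Inv HS' Hh.
  have [h' K1 K2] := ah.1.
  have [_ [_ Lh']] := Inv_inv (gen_Inv HS' Hh) K1 K2.
  have -> : r (f i) vroot = Tr (avert i) (h' vroot) by rewrite E K2.
  rewrite (Lam_formula (g := Tr (avert i))); last by move=> v; apply: Tr_loc; exact: hatF1.
  by rewrite Tr_at_root Ac_nil //; exact: Lam_reduced.
have : injective f.
  move=> i j Eij; apply: val_inj => /=.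
  by rewrite -(size_Lam_alt i) -(size_Lam_alt j) !key Eij.
by move/leq_card; rewrite !card_ord ltnn.
Qed.

End Alt.
End LamSec.

Section Phi.
Variable Omega : finType.
Local Notation vertex := (vertex Omega).
Local Notation step := (@step Omega).
Local Notation vroot := (vroot Omega).
Variable F' : {group {perm Omega}}.
Local Notation N := (<<\bigcup_(x : Omega) 'C_F'[x | 'P]>>).

Lemma wit_uniq (g : vertex -> vertex) v (q r : {perm Omega}) :
  (forall w, g (step v w) = step (g v) (q w)) ->
  (forall w, g (step v w) = step (g v) (r w)) -> q = r.
Proof. move=> Eq Er; apply/permP => w. apply: (@vstep_inj _ (g v)); by rewrite -Eq -Er. Qed.

Lemma memN q x : q \in F' -> q x = x -> q \in N.
Proof.
move=> qF qx; apply: mem_gen; apply/bigcupP; exists x => //.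
by rewrite in_setI qF /=; apply/astab1P.
Qed.

Lemma edge_stab_N (g : vertex -> vertex) v0 c :
  (forall v, loc_in F' g v) -> g v0 = v0 -> g (step v0 c) = step v0 c ->
  forall v, loc_in N g v.
Proof.
move=> Hl gv0 gc.
have [p0 p0F E0] := Hl vroot.
have claim : forall v q, q \in F' ->
    (forall w, g (step v w) = step (g v) (q w)) -> q * p0^-1 \in N.
  apply: vertex_ind => [|v a IH] q qF Eq.
    by rewrite (wit_uniq Eq E0) mulgV group1.
  have [r rF Er] := Hl v.
  have qa : q a = r a.
    apply: (@vstep_inj _ (g (step v a))).
    by rewrite -Eq vstep_step Er vstep_step.
  have -> : q * p0^-1 = (q * r^-1) * (r * p0^-1) by rewrite mulgA mulgKV.
  rewrite groupM ?IH //.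
  apply: (memN (x := a)); first by rewrite groupM ?groupV.
  by rewrite permM qa permK.
have [q0 q0F E0'] := Hl v0.
have q0c : q0 c = c by apply: (@vstep_inj _ (g v0)); rewrite -E0' gc gv0.
have q0N := memN q0F q0c.
have p0N : p0 \in N.
  by have := claim _ _ q0F E0'; rewrite groupMl // groupV.
move=> v; have [q qF Eq] := Hl v; exists q => //.
by have := claim _ _ qF Eq; rewrite groupMr ?groupV.
Qed.

End Phi.

Section Main.
Variable Omega : finType.
Local Notation vertex := (vertex Omega).
Local Notation step := (@step Omega).
Local Notation vroot := (vroot Omega).
Variables F F' : {group {perm Omega}}.
Hypothesis sFF' : F \subset F'.
Hypothesis sF'h : F' \subset hatF F.
Variable c0 : Omega.
Local Notation G := (GFF F F').
Local Notation N := (<<\bigcup_(x : Omega) 'C_F'[x | 'P]>>).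

Lemma GFF_id : G id.
Proof.
have -> : (id : vertex -> vertex) = Tr vroot.
  by apply: functional_extensionality => v; rewrite Tr_root.
exact: Tr_GFF.
Qed.

Lemma plus_G f : plus G f -> G f.
Proof.
elim => [|g h [v [w [Gg _]]] _ IH|g g' h [v [w [Gg _]]] K1 K2 _ IH].
- exact: GFF_id.
- exact: GFF_comp.
- by apply: GFF_comp => //; apply: GFF_inv K1 K2.
Qed.

Lemma plus_parity f : plus G f -> vodd (f vroot) = false.
Proof.
apply: gen_parity => g [v [w [[[ag _] _] [gv _]]]].
by split => //; exists v.
Qed.

Section Suff.
Hypothesis Ftr : [transitive F, on [set: Omega] | 'P].
Hypothesis Fgen : (F' :=: N)%g.

Lemma realize q : q \in N -> exists h, plus G h /\
  (forall w, h (step vroot w) = step vroot (q w)) /\ h vroot = vroot.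
Proof.
case/gen_prodgP => m [cs Hc ->].
elim: m cs Hc => [|m IH] cs Hc.
  rewrite big_ord0; exists id; split; first exact: gen_id.
  by split => // w; rewrite perm1.
rewrite big_ord_recr /=.
have [h [Ph [Eh h0]]] := IH (fun i => cs (widen_ord (leqnSn m) i)) (fun i => Hc _).
have /bigcupP [x _] := Hc ord_max.
rewrite in_setI => /andP [cF /astab1P cx].
exists (g0 sFF' sF'h cF \o h); split.
  apply: gen_mul Ph; exists vroot, x; split; first exact: g0_GFF.
  split; first exact: g0_root.
  by rewrite g0_root_step; congr step.
split; last by rewrite /= h0 g0_root.
by move=> w; rewrite /= Eh g0_root_step permM.
Qed.

Lemma stab_plus g : G g -> g vroot = vroot -> plus G g.
Proof.
move=> Gg g0r.
have [_ [_ Ug]] := Gg.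
have [q qF Eq] := Ug vroot.
have qN : q \in N by rewrite -Fgen.
have [h [Ph [Eh h0]]] := realize qN.
have Gh := plus_G Ph.
have [h' K1 K2] := Gh.1.1.1.
have Gh' := GFF_inv Gh K1 K2.
have Ge : G (h' \o g) := GFF_comp Gh' Gg.
have Pe : plus G (h' \o g).
  have Se : exists v w, edge_stab G v w (h' \o g).
    exists vroot, c0; split => //; split.
      by rewrite /= g0r -{1}h0 K1.
    by rewrite /= Eq g0r -Eh K1.
  exact: (gen_mul Se (gen_id _)).
have -> : g = h \o (h' \o g) by apply: functional_extensionality => v; rewrite /= K2.
exact: gen_comp.
Qed.

Lemma even_plus n g : G g -> size (sval (g vroot)) = n.*2 -> plus G g.
Proof.
elim: n g => [|n IH] g Gg Hs.
  apply: stab_plus => //; apply: val_inj => /=.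
  by apply/eqP; rewrite -size_eq0 Hs.
have Hr := proj2_sig (g vroot).
case E: (sval (g vroot)) Hs Hr => [|b [|a x']] //; try by rewrite /= doubleS.
move=> Hs Hr.
have Hu := reduced_cons Hr.
pose u : vertex := exist _ (a :: x') Hu.
have [u' [K1 K2]] := Tr_inv u.
have [f fF fE] := atransP2 Ftr (in_setT b) (in_setT a).
have fF' : f \in F' := subsetP sFF' _ fF.
pose k := Tr u \o g0 sFF' sF'h fF' \o Tr u'.
pose k' := Tr u \o g0' sFF' sF'h fF' \o Tr u'.
have Pk : plus G k.
  apply: plus_conj; [exact: Tr_GFF | exact: K1 | exact: K2 |].
  by apply: stab_plus; [exact: g0_GFF | exact: g0_root].
have Pk' : plus G k'.
  apply: plus_conj; [exact: Tr_GFF | exact: K1 | exact: K2 |].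
  by apply: stab_plus; [exact: g0'_GFF | exact: g0'_root].
have Tu'u : Tr u' u = vroot by rewrite -{1}(Tr_at_root u) K1.
have gu : g vroot = step u b.
  apply: val_inj; change (sval (g vroot) = step_seq (a :: x') b).
  by rewrite E; exact: (esym (step_cons Hr)).
have kg : sval (k (g vroot)) = x'.
  have fb : f b = a by rewrite fE.
  have -> : k (g vroot) = step u a.
    by rewrite /k /comp gu Tr_step Tu'u g0_root_step fb Tr_step Tr_at_root.
  by rewrite /= eqxx.
have Pkg : plus G (k \o g).
  apply: IH; first exact: GFF_comp (plus_G Pk) Gg.
  change (size (sval (k (g vroot))) = n.*2).
  by rewrite kg; move: Hs; rewrite /= doubleS; case.
have -> : g = k' \o (k \o g).
  apply: functional_extensionality => v.
  by rewrite /k /k' /= K1 g0K K2.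
exact: gen_comp.
Qed.

Lemma three_to_one : has_index G (plus G) 2.
Proof.
pose cv := step vroot c0.
pose t := Tr cv.
have tt : forall v, t (t v) = v.
  move=> v; rewrite /t Tr_comp.
  have -> : Tr cv cv = vroot by apply: val_inj; rewrite /= eqxx.
  exact: Tr_root.
have tr : vodd (t vroot) = true by [].
pose r := fun i : 'I_2 => if nat_of_ord i is 0 then id else t.
exists r; split.
  by move=> [[|i] Hi] /=; [exact: GFF_id | exact: Tr_GFF].
split.
  move=> g Gg.
  case Hg: (vodd (g vroot)).
    exists (@Ordinal 2 1 isT); exists (t \o g) => //=.
    apply: (even_plus (n := (size (sval ((t \o g) vroot)))./2)).
      exact: GFF_comp (Tr_GFF _ _ _) Gg.
    have : vodd ((t \o g) vroot) = false.
      by rewrite /= (aut_parity (Tr_aut cv)) Hg.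
    rewrite /vodd => Ho.
    by rewrite -{1}(odd_double_half (size _)) Ho.
  exists (@Ordinal 2 0 isT); exists g => //=.
  apply: (even_plus (n := (size (sval (g vroot)))./2)) => //.
  move: Hg; rewrite /vodd => Ho.
  by rewrite -{1}(odd_double_half (size _)) Ho.
move=> [[|[|i]] Hi] [[|[|j]] Hj] // [h Ph Eh]; try by apply: val_inj.
- have E : t vroot = h vroot by exact: (Eh vroot).
  by have := plus_parity Ph; rewrite -E tr.
- have E : vroot = t (h vroot) by exact: (Eh vroot).
  have := plus_parity Ph.
  have -> : h vroot = t vroot by rewrite -[h vroot]tt -E.
  by rewrite tr.
Qed.

End Suff.

Lemma nec n : has_index G (plus G) n ->
  [transitive F, on [set: Omega] | 'P] /\ (F' :=: N)%g.
Proof.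
move=> Hn; split.
  case: (boolP [transitive F, on [set: Omega] | 'P]) => // ntr; exfalso.
  case: (boolP [exists a, exists b, cls F a != cls F b]).
    case/existsP => a /existsP [b ab].
    apply: (no_fin_index ab (n := n) _ _ Hn).
      by move=> x; exact: Tr_GFF.
    move=> g [v [w [[[ag _] [_ Ug]] [gv _]]]].
    split => //; split; last by exists v.
    by move=> u; apply: loc_in_sub sF'h (Ug u).
  move=> H; move: ntr; apply/negP/negPn.
  apply/imsetP; exists c0; first by [].
  apply/setP => x; rewrite inE; apply/esym.
  move/existsPn: H => /(_ c0) /existsPn /(_ x) /negPn /eqP H.
  rewrite -/(cls F c0) H; exact: orbit_refl.
apply/eqP; rewrite eqEsubset; apply/andP; split; last first.
  rewrite gen_subG; apply/bigcupsP => x _; exact: subsetIl.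
case: (boolP (F' \subset N)) => // nsub; exfalso.
have [q qF qN] := subsetPn nsub.
have ab : cls <<\bigcup_(x : Omega) 'C_F'[x | 'P]>>%G c0 != cls <<\bigcup_(x : Omega) 'C_F'[x | 'P]>>%G (q c0).
  apply/eqP => E.
  have : q c0 \in orbit 'P N c0.
    by rewrite /cls in E; rewrite E orbit_refl.
  case/orbitP => m mN mE.
  have mF : m \in F'.
    move: mN; apply/subsetP; rewrite gen_subG; apply/bigcupsP => x _; exact: subsetIl.
  have : q * m^-1 \in N.
    apply: (memN (x := c0)); first by rewrite groupM ?groupV.
    by rewrite permM -mE /= permK.
  by rewrite groupMr ?groupV // (negbTE qN).
apply: (no_fin_index ab (n := n) _ _ Hn).
  by move=> x; exact: Tr_GFF.
move=> g [v [w [[[ag _] [_ Ug]] [gv gw]]]].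
split => //; split; last by exists v.
move=> u; apply: loc_in_sub; first exact: sub_hatF.
exact: (edge_stab_N Ug gv gw).
Qed.

End Main.

Local Close Scope group_scope.

Theorem mainTheorem16 (Omega : finType) (F F' : {group {perm Omega}}) :
  3 <= #|Omega| ->
  F \subset F' -> F' \subset hatF F ->
  (has_index (GFF F F') (plus (GFF F F')) 2 <->
   exists n, has_index (GFF F F') (plus (GFF F F')) n) /\
  ((exists n, has_index (GFF F F') (plus (GFF F F')) n) <->
   ([transitive F, on [set: Omega] | 'P] /\
    (F' :=: <<\bigcup_(x : Omega) 'C_F'[x | 'P]>>)%g)).
Proof.
move=> H3 sFF' sF'h.
have [c0 _] : exists c : Omega, true.
  have : 0 < #|Omega| by apply: leq_trans H3.
  by case/card_gt0P => c _; exists c.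
have P23 : (exists n, has_index (GFF F F') (plus (GFF F F')) n) ->
    [transitive F, on [set: Omega] | 'P] /\
    (F' :=: <<\bigcup_(x : Omega) 'C_F'[x | 'P]>>)%g.
  by case=> n; apply: nec.
have P31 : [transitive F, on [set: Omega] | 'P] /\
    (F' :=: <<\bigcup_(x : Omega) 'C_F'[x | 'P]>>)%g ->
    has_index (GFF F F') (plus (GFF F F')) 2.
  by case=> Ftr Fgen; apply: three_to_one.
split; split.
- by move=> H; exists 2.
- by move=> H; apply: P31; apply: P23.
- exact: P23.
- by move=> H; exists 2; apply: P31.
Qed.
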